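(* Let $\kappa$ be an algebraically closed field of characteristic zero, complete for a non-trivial non-Archimedean absolute value. Let $a,b\in\kappa$ with $a\ne0$ and $|a|\le1$, and let $L(z)=az+b$. Let $f\in\mathcal{A}(\kappa)$ be an entire function, not identically zero, and let $m$ be a positive integer. Then for every $r>|b|/|a|$, $$\mu(r,f\circ L)\le\mu(r,f),\qquad \mu\!\left(r,\frac{f\circ L}{f}\right)\le1,\qquad \mu\!\left(r,\frac{\Delta_L^mf}{f}\right)\le1.$$
   Context: $\mathcal{A}(\kappa)$ is the ring of entire functions over $\kappa$: power series $\sum_{n\ge0}a_nz^n$ with $a_n\in\kappa$ converging on all of $\kappa$. For such $g$, $\mu(r,g)=\max_n|a_n|r^n$; for a meromorphic $g/h$ ($g,h$ entire, $h\not\equiv0$), $\mu(r,g/h)=\mu(r,g)/\mu(r,h)$. The difference operators are $\Delta_Lf=f\circ L-f$ and $\Delta_L^mf=\Delta_L(\Delta_L^{m-1}f)$ (with $\Delta_L^1=\Delta_L$). *)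

(* Defs.v *)
From HB Require Import structures.
From mathcomp Require Import all_boot all_order all_algebra.
From mathcomp Require Import boolp classical_sets reals.
Set Implicit Arguments. Unset Strict Implicit. Unset Printing Implicit Defensive.
Import Order.TTheory GRing.Theory Num.Theory.
Local Open Scope ring_scope.
Local Open Scope classical_set_scope.

Section Defs.
Variables (K : fieldType) (R : realType) (abs : K -> R).

Definition nonarch_abs : Prop :=
  [/\ forall x, 0 <= abs x,
      forall x, abs x = 0 <-> x = 0,
      forall x y, abs (x * y) = abs x * abs y &
      forall x y, abs (x + y) <= Num.max (abs x) (abs y)].

Definition nontrivial_abs : Prop := exists x, abs x != 0 /\ abs x != 1.

Definition complete_abs : Prop :=
  forall u : nat -> K,
    (forall e : R, 0 < e -> exists N, forall m n, (N <= m)%N -> (N <= n)%N ->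
        abs (u m - u n) < e) ->
    exists l, forall e : R, 0 < e -> exists N, forall n, (N <= n)%N ->
        abs (u n - l) < e.

Definition series_sums (u : nat -> K) (s : K) : Prop :=
  forall e : R, 0 < e -> exists N, forall M, (N <= M)%N ->
    abs (\sum_(i < M) u i - s) < e.

Definition coef_rep (c : nat -> K) (g : K -> K) : Prop :=
  forall z, series_sums (fun n => c n * z ^+ n) (g z).

Definition entire (g : K -> K) : Prop := exists c, coef_rep c g.

(* mu(r, g) = max_n |c_n| r^n, c the coefficients of g.  (The coefficients
   of an entire function are unique, so taking the supremum over all
   representing coefficient sequences is the same as using "the" one.) *)
Definition mu (r : R) (g : K -> K) : R :=
  sup [set x : R | exists (c : nat -> K) (n : nat),
                     coef_rep c g /\ x = abs (c n) * r ^+ n].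

(* mu of a meromorphic quotient g/h: mu(r, g/h) = mu(r, g) / mu(r, h) *)
Definition mu_quot (r : R) (g h : K -> K) : R := mu r g / mu r h.
End Defs.

Definition DeltaL (K : fieldType) (L : K -> K) (f : K -> K) : K -> K :=
  fun z => f (L z) - f z.
Definition DeltaLn (K : fieldType) (L : K -> K) (m : nat) (f : K -> K) :=
  iter m (DeltaL L) f.

(* Main.v *)
Require Import Defs.
From HB Require Import structures.
From mathcomp Require Import all_boot all_order all_algebra.
From mathcomp Require Import boolp classical_sets reals.
From mathcomp Require Import ring lra.
Import Order.TTheory GRing.Theory Num.Theory.
Local Open Scope ring_scope.
Set Implicit Arguments. Unset Strict Implicit.


Section Basic.
Variables (K : fieldType) (R : realType) (abs : K -> R).
Hypothesis habs : nonarch_abs abs.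

Lemma abs_ge0 x : 0 <= abs x. Proof. by case: habs. Qed.
Lemma abs_eq0 x : abs x = 0 <-> x = 0. Proof. by case: habs. Qed.
Lemma absM x y : abs (x * y) = abs x * abs y. Proof. by case: habs. Qed.
Lemma absD x y : abs (x + y) <= Num.max (abs x) (abs y). Proof. by case: habs. Qed.
Lemma abs0 : abs 0 = 0. Proof. by apply/abs_eq0. Qed.
Lemma abs1 : abs 1 = 1.
Proof.
have h := absM 1 1; rewrite mulr1 in h.
have nz : abs 1 != 0 by apply/eqP => /abs_eq0/eqP; rewrite oner_eq0.
by apply: (mulfI nz); rewrite -h mulr1.
Qed.
Lemma absN1 : abs (-1) = 1.
Proof.
have h := absM (-1) (-1); rewrite mulrNN mulr1 abs1 in h.
have h0 := abs_ge0 (-1).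
have : (abs (-1) - 1) * (abs (-1) + 1) = 0 by rewrite -subr_sqr expr2 -h expr1n subrr.
move/eqP; rewrite mulf_eq0 => /orP[/eqP|/eqP]; first by move/eqP; rewrite subr_eq0 => /eqP.
move=> h1; have : 0 < abs (-1) + 1 by rewrite ltr_wpDl.
by rewrite h1 ltxx.
Qed.
Lemma absN x : abs (- x) = abs x.
Proof. by rewrite -mulN1r absM absN1 mul1r. Qed.
Lemma absB x y : abs (x - y) = abs (y - x).
Proof. by rewrite -absN opprB. Qed.
Lemma absX x n : abs (x ^+ n) = abs x ^+ n.
Proof. elim: n => [|n IH]; first by rewrite !expr0 abs1. by rewrite !exprS absM IH. Qed.
Lemma absD_le x y B : abs x <= B -> abs y <= B -> abs (x + y) <= B.
Proof. move=> hx hy; apply: le_trans (absD x y) _; by rewrite ge_max hx hy. Qed.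
Lemma abs_sum_le (I : Type) (s : seq I) (P : pred I) (F : I -> K) B :
  0 <= B -> (forall i, P i -> abs (F i) <= B) -> abs (\sum_(i <- s | P i) F i) <= B.
Proof.
move=> B0 h; apply: (big_ind (fun x => abs x <= B)).
- by rewrite abs0.
- by move=> x y; apply: absD_le.
- exact: h.
Qed.
Lemma abs_natr n : abs (n%:R : K) <= 1.
Proof.
elim: n => [|n IH]; first by rewrite abs0.
by rewrite -addn1 natrD; apply: absD_le => //; rewrite abs1.
Qed.
Lemma abs_mulrn x n : abs (x *+ n) <= abs x.
Proof. by rewrite -mulr_natr absM ler_piMr ?abs_ge0 ?abs_natr. Qed.
Lemma abs_lt_addr x y : abs y < abs x -> abs (x + y) = abs x.
Proof.
move=> h; apply/eqP; rewrite eq_le; apply/andP; split.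
  by apply: absD_le => //; apply: ltW.
have := absD (x + y) (- y); rewrite addrK absN.
rewrite le_max => /orP[] // h2.
by move: (le_lt_trans h2 h); rewrite ltxx.
Qed.
Lemma abs_sub3 x y z : abs (x - z) <= Num.max (abs (x - y)) (abs (y - z)).
Proof. by have := absD (x - y) (y - z); rewrite addrA subrK. Qed.
Lemma absV x : abs (x^-1) = (abs x)^-1.
Proof.
have [->|nz] := eqVneq x 0; first by rewrite invr0 abs0 invr0.
have h := absM x x^-1; rewrite mulfV // abs1 in h.
have : abs x != 0 by apply/eqP => /abs_eq0/eqP; rewrite (negbTE nz).
by move=> ax; rewrite -[RHS]mulr1 h mulrA mulVf // mul1r.
Qed.
End Basic.


Lemma bern (R : realFieldType) (q : R) n : 0 <= q -> 1 + n%:R * q <= (1 + q) ^+ n.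
Proof.
move=> q0; elim: n => [|n IH]; first by rewrite mul0r addr0 expr0.
rewrite exprS -natr1.
have h1 : 0 <= n%:R * q by apply: mulr_ge0.
have h2 : 0 <= (n%:R * q) * q by apply: mulr_ge0.
have : (1 + q) * (1 + n%:R * q) <= (1 + q) * (1 + q) ^+ n.
  by apply: ler_wpM2l => //; lra.
nra.
Qed.

Section Conv.
Variables (K : fieldType) (R : realType) (abs : K -> R).
Hypothesis habs : nonarch_abs abs.

Definition terms0 (u : nat -> K) := forall e : R, 0 < e -> exists N, forall n, (N <= n)%N -> abs (u n) < e.

Lemma lim_uniq (u : nat -> K) l1 l2 :
  (forall e : R, 0 < e -> exists N, forall n, (N <= n)%N -> abs (u n - l1) < e) ->
  (forall e : R, 0 < e -> exists N, forall n, (N <= n)%N -> abs (u n - l2) < e) ->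
  l1 = l2.
Proof.
move=> h1 h2; apply/eqP; rewrite -subr_eq0; apply/eqP/(abs_eq0 habs).
apply/eqP; rewrite eq_le abs_ge0 // andbT; apply/ler_addgt0Pr => e e0.
rewrite add0r; have [N1 H1] := h1 e e0; have [N2 H2] := h2 e e0.
have := abs_sub3 habs l1 (u (maxn N1 N2)) l2.
move=> /le_trans; apply; rewrite ge_max; apply/andP; split; apply/ltW.
  by rewrite absB //; apply: H1; rewrite leq_maxl.
by apply: H2; rewrite leq_maxr.
Qed.

Lemma series_terms0 u s : series_sums abs u s -> terms0 u.
Proof.
move=> h e e0; have [N HN] := h e e0; exists N => n Nn.
have -> : u n = \sum_(i < n.+1) u i - \sum_(i < n) u i by rewrite big_ord_recr /= addrAC subrr add0r.
apply: le_lt_trans (abs_sub3 habs _ s _) _; rewrite gt_max; apply/andP; split.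
  by apply: HN; apply: leqW.
by rewrite absB //; apply: HN.
Qed.

Lemma terms0_bounded u : terms0 u -> exists B, 0 <= B /\ forall n, abs (u n) <= B.
Proof.
move=> h; have [N HN] := h 1 ltr01.
have S0 : 0 <= \sum_(i < N) abs (u i) by apply: sumr_ge0 => i _; apply: abs_ge0.
exists (\sum_(i < N) abs (u i) + 1); split; first by apply: addr_ge0.
move=> n; case: (ltnP n N) => nN.
  rewrite (bigD1 (Ordinal nN)) //= -addrA ler_wpDr //.
  by apply: addr_ge0 => //; apply: sumr_ge0 => i _; apply: abs_ge0.
by apply: ltW; apply: lt_le_trans (HN n nN) _; rewrite lerDr.
Qed.

Lemma abs_sum_nat_le m n (F : nat -> K) B :
  0 <= B -> (forall i, (m <= i < n)%N -> abs (F i) <= B) -> abs (\sum_(m <= i < n) F i) <= B.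
Proof.
move=> B0 h; rewrite big_nat_cond; apply: abs_sum_le => // i; rewrite andbT; exact: h.
Qed.

Lemma sum_split (F : nat -> K) m n : (m <= n)%N ->
  \sum_(i < n) F i = \sum_(i < m) F i + \sum_(m <= i < n) F i.
Proof. by move=> mn; rewrite -[\sum_(i < n) F i](big_mkord xpredT) -[\sum_(i < m) F i](big_mkord xpredT) (big_cat_nat (leq0n m) mn). Qed.

Hypothesis hcomp : complete_abs abs.

Lemma series_of_terms0 u : terms0 u -> exists s, series_sums abs u s.
Proof.
move=> h; apply: hcomp => e e0.
have e20 : 0 < e / 2 by rewrite divr_gt0.
have [N HN] := h _ e20; exists N.
suff H : forall m n, (N <= m)%N -> (m <= n)%N -> abs (\sum_(i < m) u i - \sum_(i < n) u i) < e.
  move=> m n Nm Nn; case: (leqP m n) => mn; first exact: H.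
  by rewrite absB //; apply: H => //; apply: ltnW.
move=> m n Nm mn; rewrite (sum_split _ mn) opprD addrA subrr sub0r absN //.
apply: le_lt_trans (_ : e / 2 < e); last by rewrite ltr_pdivrMr // ltr_pMr // ltr1n.
apply: abs_sum_nat_le; first exact: ltW.
move=> i /andP[mi _]; apply: ltW; apply: HN; exact: leq_trans mi.
Qed.

Lemma tail_bound u s N eps : series_sums abs u s -> 0 <= eps ->
  (forall n, (N <= n)%N -> abs (u n) <= eps) -> abs (s - \sum_(i < N) u i) <= eps.
Proof.
move=> h e0 hb; apply/ler_addgt0Pr => d d0.
have [M0 HM] := h d d0; pose M := maxn M0 N.
apply: le_trans (abs_sub3 habs s (\sum_(i < M) u i) _) _.
rewrite ge_max; apply/andP; split.
  rewrite absB //; apply: ltW; apply: lt_le_trans (HM M _) _; first by rewrite leq_maxl.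
  by rewrite lerDr.
rewrite (sum_split _ (leq_maxr M0 N)) addrC addKr.
apply: le_trans (_ : eps <= eps + d); last by rewrite lerDl ltW.
by apply: abs_sum_nat_le => // i /andP[Ni _]; apply: hb.
Qed.

Lemma series_scale u s y : series_sums abs u s ->
  series_sums abs (fun n => u n * y) (s * y).
Proof.
move=> h e e0.
have y1 : 0 < abs y + 1 by apply: ltr_wpDl; [apply: abs_ge0|].
have [N HN] := h (e / (abs y + 1)) (divr_gt0 e0 y1); exists N => M NM.
rewrite -mulr_suml -mulrBl (absM habs).
have := HN M NM; rewrite ltr_pdivlMr // => h2.
apply: le_lt_trans h2; apply: ler_wpM2l; first exact: abs_ge0.
by rewrite lerDl.
Qed.

Lemma series_sub u v s t : series_sums abs u s -> series_sums abs v t ->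
  series_sums abs (fun n => u n - v n) (s - t).
Proof.
move=> h1 h2 e e0; have [N1 H1] := h1 e e0; have [N2 H2] := h2 e e0.
exists (maxn N1 N2) => M NM; rewrite sumrB.
have -> : \sum_(i < M) u i - \sum_(i < M) v i - (s - t) =
   (\sum_(i < M) u i - s) + - (\sum_(i < M) v i - t).
  by rewrite opprB; ring.
apply: le_lt_trans (absD habs _ _) _; rewrite absN // gt_max.
by rewrite H1 ?H2 //; [apply: leq_trans NM; rewrite leq_maxr | apply: leq_trans NM; rewrite leq_maxl].
Qed.

Hypothesis hnt : nontrivial_abs abs.

Lemma exists_big (r : R) : exists w, r <= abs w.
Proof.
have [x [x0 x1]] := hnt.
have ax0 : 0 < abs x by rewrite lt_def x0 abs_ge0.
have [y y1] : exists y, 1 < abs y.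
  case: (ltrgtP (abs x) 1) => h; last by rewrite h eqxx in x1.
    exists x^-1; rewrite (absV habs) invf_gt1 //.
  by exists x.
pose q := abs y - 1; have q0 : 0 < q by rewrite subr_gt0.
pose r' := Num.max r 0.
have r0 : 0 <= r' / q by apply: divr_ge0; [rewrite le_max lexx orbT|apply: ltW].
have hb := archi_boundP r0; set n := Num.bound _ in hb.
exists (y ^+ n); rewrite (absX habs).
have -> : abs y = 1 + q by rewrite /q addrC subrK.
apply: le_trans (bern n (ltW q0)).
have : r' < n%:R * q by rewrite -ltr_pdivrMr.
have : r <= r' by rewrite le_max lexx.
lra.
Qed.

Lemma exists_small (d : R) : 0 < d -> exists z, z != 0 /\ abs z < d.
Proof.
move=> d0; have [w hw] := exists_big (d^-1 + 1).
have aw : 0 < abs w by apply: lt_le_trans hw; apply: ltr_wpDl => //; rewrite invr_ge0 ltW.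
have w0 : w != 0 by apply/eqP => w0; move: aw; rewrite w0 (abs0 habs) ltxx.
exists w^-1; split; first by rewrite invr_eq0.
rewrite (absV habs) -(invrK d) ltf_pV2 ?posrE ?invr_gt0 //.
by apply: lt_le_trans hw; rewrite ltrDl.
Qed.

End Conv.


Section Uniq.
Variables (K : fieldType) (R : realType) (abs : K -> R).
Hypothesis habs : nonarch_abs abs.
Hypothesis hnt : nontrivial_abs abs.

Lemma coef_zero (e : nat -> K) :
  (forall z, series_sums abs (fun n => e n * z ^+ n) 0) -> forall n, e n = 0.
Proof.
move=> h n; apply/eqP/negPn/negP => hn.
case: (ex_minnP (ex_intro (fun n => e n != 0) n hn)) => k ek kmin.
have [B0 [B0ge hB0]] := terms0_bounded habs (series_terms0 habs (h 1)).
pose B := B0 + 1; have Bgt : 0 < B by rewrite /B ltr_wpDl.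
have hB : forall n, abs (e n) <= B.
  move=> i; have := hB0 i; rewrite expr1n mulr1 => h1; apply: le_trans h1 _.
  by rewrite /B lerDl.
pose c := abs (e k).
have c0 : 0 < c by rewrite /c lt_def abs_ge0 // andbT; apply/eqP => /(abs_eq0 habs)/eqP; rewrite (negbTE ek).
have d0 : 0 < Num.min 1 (c / B) by rewrite lt_min ltr01 divr_gt0.
have [z [z0 hz]] := exists_small habs hnt d0.
pose t := abs z.
have t0 : 0 < t by rewrite /t lt_def abs_ge0 // andbT; apply/eqP => /(abs_eq0 habs)/eqP; rewrite (negbTE z0).
move: hz; rewrite lt_min -/t => /andP[t1 tcB].
have ct0 : 0 < c * t ^+ k by rewrite mulr_gt0 // exprn_gt0.
have key : forall M, (k < M)%N -> abs (\sum_(i < M) e i * z ^+ i) = c * t ^+ k.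
  move=> M kM; rewrite (bigD1 (Ordinal kM)) //=.
  rewrite abs_lt_addr //; first by rewrite (absM habs) (absX habs).
  rewrite (absM habs) (absX habs) -/c -/t.
  apply: le_lt_trans (_ : B * t ^+ k.+1 < c * t ^+ k).
    apply: (abs_sum_le habs); first by rewrite mulr_ge0 ?exprn_ge0 // ltW.
    move=> i /eqP ik; rewrite (absM habs) (absX habs) -/t.
    have ik' : nat_of_ord i != k by apply/eqP => h2; apply: ik; apply: val_inj.
    case: (ltngtP i k) => h3.
    - have -> : e i = 0 by apply/eqP; apply/negPn/negP => h4; move: (kmin _ h4); rewrite leqNgt h3.
      by rewrite (abs0 habs) mul0r mulr_ge0 ?exprn_ge0 // ltW.
    - apply: ler_pM; [exact: (abs_ge0 habs)|apply: exprn_ge0; exact: ltW|exact: hB|].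
      by apply: ler_wiXn2l => //; apply: ltW.
    - by rewrite h3 eqxx in ik'.
  rewrite exprS mulrA ltr_pM2r ?exprn_gt0 //.
  by rewrite -ltr_pdivlMl // mulrC.
have [N HN] := h z _ ct0.
have := HN (maxn N k.+1) (leq_maxl _ _).
rewrite subr0 key ?ltxx //.
by rewrite leq_max ltnSn orbT.
Qed.

Lemma coef_uniq c1 c2 g : coef_rep abs c1 g -> coef_rep abs c2 g -> c1 = c2.
Proof.
move=> h1 h2; apply: funext => n; apply/eqP; rewrite -subr_eq0; apply/eqP.
have H := @coef_zero (fun n => c1 n - c2 n).
suff hz : forall z, series_sums abs (fun n => (c1 n - c2 n) * z ^+ n) 0 by exact: H hz n.
move=> z; have := series_sub habs (h1 z) (h2 z); rewrite subrr.
suff -> : (fun n => (c1 n - c2 n) * z ^+ n) = (fun n => c1 n * z ^+ n - c2 n * z ^+ n) by [].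
by apply: funext => i; rewrite mulrBl.
Qed.

End Uniq.


Section Mu.
Local Open Scope classical_set_scope.
Variables (K : fieldType) (R : realType) (abs : K -> R).
Hypothesis habs : nonarch_abs abs.
Hypothesis hnt : nontrivial_abs abs.

Lemma mu_facts g c (r : R) : coef_rep abs c g -> 0 < r ->
  (forall n, abs (c n) * r ^+ n <= mu abs r g) /\
  (forall M, (forall n, abs (c n) * r ^+ n <= M) -> mu abs r g <= M).
Proof.
move=> hc r0.
have [w hw] := exists_big habs hnt r.
have [B [B0 hB]] := terms0_bounded habs (series_terms0 habs (hc w)).
have bnd : forall n, abs (c n) * r ^+ n <= B.
  move=> n; apply: le_trans (hB n); rewrite (absM habs) (absX habs).
  apply: ler_wpM2l; first exact: abs_ge0.
  by apply: lerXn2r => //; rewrite nnegrE ?ltW //; apply: lt_le_trans hw.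
rewrite /mu; set S := [set x : R | _].
have memS : forall x, S x -> exists n, x = abs (c n) * r ^+ n.
  move=> x [c' [n [hc' ->]]]; exists n; by rewrite (coef_uniq habs hnt hc' hc).
have ne : S !=set0 by exists (abs (c 0%N) * r ^+ 0); exists c, 0%N.
have ub : ubound S B by move=> x /memS [n ->]; exact: bnd.
have hs : has_sup S by split => //; exists B.
split.
  move=> n; apply: (sup_upper_bound hs); by exists c, n.
move=> M hM; apply: ge_sup => // x /memS [n ->]; exact: hM.
Qed.

Lemma mu_ge0 g c (r : R) : coef_rep abs c g -> 0 < r -> 0 <= mu abs r g.
Proof.
move=> hc r0; have [h _] := mu_facts hc r0.
apply: le_trans (h 0%N); rewrite mulr_ge0 // ?exprn_ge0 ?(abs_ge0 habs) // ltW.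
Qed.

End Mu.


Section Comp.
Variables (K : fieldType) (R : realType) (abs : K -> R).
Hypothesis habs : nonarch_abs abs.
Hypothesis hnt : nontrivial_abs abs.
Hypothesis hcomp : complete_abs abs.
Variables (a b : K) (r : R).
Hypotheses (ha1 : abs a <= 1) (hbr : abs b <= r) (r0 : 0 < r).

Definition tt (c : nat -> K) n k := c n * a ^+ k * b ^+ (n - k) *+ 'C(n, k).

Lemma tt_small c n k : (n < k)%N -> tt c n k = 0.
Proof. by move=> h; rewrite /tt bin_small // mulr0n. Qed.

Lemma tt_bound c n k (x : K) (w : K) :
  abs (a * x) <= abs w -> abs b <= abs w ->
  abs (tt c n k * x ^+ k) <= abs (c n * w ^+ n).
Proof.
move=> h1 h2; case: (ltnP n k) => nk.
  by rewrite tt_small // mul0r (abs0 habs) abs_ge0.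
have w0 : 0 <= abs w := abs_ge0 habs w.
have e1 : abs (tt c n k * x ^+ k) <= abs (c n * a ^+ k * b ^+ (n - k)) * abs x ^+ k.
  rewrite /tt (absM habs) (absX habs); apply: ler_wpM2r; first by rewrite exprn_ge0 // abs_ge0.
  exact: abs_mulrn.
apply: le_trans e1 _.
have -> : abs (c n * a ^+ k * b ^+ (n - k)) * abs x ^+ k =
   abs (c n) * (abs (a * x) ^+ k * abs b ^+ (n - k)).
  rewrite !(absM habs) !(absX habs) exprMn; ring.
rewrite [abs (c n * _)](absM habs) (absX habs); apply: ler_wpM2l; first exact: abs_ge0.
rewrite -{2}(subnK nk) exprD mulrC.
apply: ler_pM.
- by rewrite exprn_ge0 // abs_ge0.
- by rewrite exprn_ge0 // abs_ge0.
- by apply: lerXn2r => //; rewrite nnegrE abs_ge0.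
- by apply: lerXn2r => //; rewrite nnegrE abs_ge0.
Qed.

Lemma tt_bound_r c n k : abs (tt c n k) * r ^+ k <= abs (c n) * r ^+ n.
Proof.
case: (ltnP n k) => nk.
  by rewrite tt_small // (abs0 habs) mul0r mulr_ge0 // ?(abs_ge0 habs) // exprn_ge0 // ltW.
have e1 : abs (tt c n k) <= abs (c n * a ^+ k * b ^+ (n - k)) := abs_mulrn habs _ _.
apply: le_trans (ler_wpM2r (exprn_ge0 _ (ltW r0)) e1) _.
rewrite !(absM habs) !(absX habs) -[in r ^+ n](subnK nk) exprD -!mulrA.
apply: ler_wpM2l; first exact: abs_ge0.
have hA0 : 0 <= abs a ^+ k by rewrite exprn_ge0 // abs_ge0.
have hA1 : abs a ^+ k <= 1 by apply: exprn_ile1; rewrite ?abs_ge0.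
have hB0 : 0 <= abs b ^+ (n - k) by rewrite exprn_ge0 // abs_ge0.
have hBD : abs b ^+ (n - k) <= r ^+ (n - k) by apply: lerXn2r => //; rewrite nnegrE ?abs_ge0 // ltW.
have hC : 0 <= r ^+ k by rewrite exprn_ge0 // ltW.
have h1 : abs b ^+ (n - k) * r ^+ k <= r ^+ (n - k) * r ^+ k by apply: ler_wpM2r.
have h2 : 0 <= abs b ^+ (n - k) * r ^+ k by apply: mulr_ge0.
apply: le_trans (_ : _ <= 1 * (abs b ^+ (n - k) * r ^+ k)) _; last by rewrite mul1r.
exact: ler_wpM2r.
Qed.

Lemma expand c z M n : (n < M)%N ->
  c n * (a * z + b) ^+ n = \sum_(k < M) tt c n k * z ^+ k.
Proof.
move=> nM; rewrite addrC exprDn mulr_sumr.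
rewrite (big_ord_widen M (fun i => c n * (b ^+ (n - i) * (a * z) ^+ i *+ 'C(n, i))) nM).
rewrite big_mkcond; apply: eq_bigr => i _.
case: ifP => hi; last by rewrite tt_small ?mul0r //; rewrite ltnNge -ltnS hi.
by rewrite /tt mulrnAr mulrnAl exprMn; congr (_ *+ _); ring.
Qed.

Lemma compose g c : coef_rep abs c g ->
  exists d, coef_rep abs d (fun z => g (a * z + b)) /\
            forall k, abs (d k) * r ^+ k <= mu abs r g.
Proof.
move=> hc.
have [mub _] := mu_facts habs hnt hc r0.
have mu0 := mu_ge0 habs hnt hc r0.
have ex : forall k, exists s, series_sums abs (fun n => tt c n k) s.
  move=> k; apply: (series_of_terms0 habs hcomp) => e e0.
  have [w hw] := exists_big habs hnt (Num.max (abs b) (abs a)).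
  have [N HN] := series_terms0 habs (hc w) e0.
  exists N => n Nn; apply: le_lt_trans (HN n Nn).
  have := @tt_bound c n k 1 w; rewrite expr1n !mulr1; apply.
    by apply: le_trans hw; rewrite le_max lexx orbT.
  by apply: le_trans hw; rewrite le_max lexx.
have [d hd] := boolp.choice ex.
exists d; split; last first.
  move=> k; have := tail_bound habs (N := 0%N) (eps := mu abs r g / r ^+ k) (hd k).
  rewrite big_ord0 subr0 -ler_pdivlMr ?exprn_gt0 //; apply.
    by rewrite divr_ge0 // exprn_ge0 // ltW.
  move=> n _; rewrite ler_pdivlMr ?exprn_gt0 //.
  exact: le_trans (tt_bound_r c n k) (mub n).
move=> z e e0.
have e20 : 0 < e / 2 by rewrite divr_gt0.
have [w hw] := exists_big habs hnt (Num.max (abs b) (abs (a * z))).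
have [N1 HN1] := series_terms0 habs (hc w) e20.
have [N2 HN2] := hc (a * z + b) _ e20.
exists (maxn N1 N2) => M hM.
have hM1 : (N1 <= M)%N by apply: leq_trans hM; rewrite leq_maxl.
have hM2 : (N2 <= M)%N by apply: leq_trans hM; rewrite leq_maxr.
have id : \sum_(n < M) c n * (a * z + b) ^+ n = \sum_(k < M) \sum_(n < M) tt c n k * z ^+ k.
  rewrite exchange_big; apply: eq_bigr => n _; exact: expand.
have H1 : abs (\sum_(k < M) d k * z ^+ k - \sum_(n < M) c n * (a * z + b) ^+ n) <= e / 2.
  rewrite id -sumrB; apply: (abs_sum_le habs); first exact: ltW.
  move=> k _.
  have := tail_bound habs (N := M) (eps := e / 2) (series_scale habs (z ^+ k) (hd k)).
  apply; first exact: ltW.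
  move=> n Nn; apply: ltW; apply: le_lt_trans (HN1 n (leq_trans hM1 Nn)).
  apply: tt_bound.
    by apply: le_trans hw; rewrite le_max lexx orbT.
  by apply: le_trans hw; rewrite le_max lexx.
apply: le_lt_trans (abs_sub3 habs _ (\sum_(n < M) c n * (a * z + b) ^+ n) _) _.
rewrite gt_max; apply/andP; split.
  apply: le_lt_trans H1 _; by rewrite ltr_pdivrMr // ltr_pMr // ltr1n.
apply: lt_trans (HN2 M hM2) _; by rewrite ltr_pdivrMr // ltr_pMr // ltr1n.
Qed.

Lemma comp_mu g c : coef_rep abs c g ->
  mu abs r (fun z => g (a * z + b)) <= mu abs r g.
Proof.
move=> hc; have [d [hd hb]] := compose hc.
have [_ hle] := mu_facts habs hnt hd r0; exact: hle.
Qed.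

Lemma delta_mu g c : coef_rep abs c g ->
  exists c', coef_rep abs c' (DeltaL (fun z => a * z + b) g) /\
             mu abs r (DeltaL (fun z => a * z + b) g) <= mu abs r g.
Proof.
move=> hc; have [d [hd hb]] := compose hc.
have hrep : coef_rep abs (fun n => d n - c n) (DeltaL (fun z => a * z + b) g).
  move=> z; have := series_sub habs (hd z) (hc z).
  suff -> : (fun n => (d n - c n) * z ^+ n) = (fun n => d n * z ^+ n - c n * z ^+ n) by [].
  by apply: funext => i; rewrite mulrBl.
exists (fun n => d n - c n); split => //.
have [_ hle] := mu_facts habs hnt hrep r0; apply: hle => n.
have [mub _] := mu_facts habs hnt hc r0.
apply: le_trans (ler_wpM2r (exprn_ge0 _ (ltW r0)) (absD habs _ _)) _.
rewrite absN // maxr_pMl; last by rewrite exprn_ge0 // ltW.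
rewrite ge_max; apply/andP; split; [exact: hb | exact: mub].
Qed.

End Comp.

Unset Implicit Arguments. Set Strict Implicit.
Theorem lemma2p1 (K : closedFieldType) (R : realType) (abs : K -> R)
  (char0 : [pchar K] =i pred0)
  (habs : nonarch_abs abs) (hnt : nontrivial_abs abs) (hcomp : complete_abs abs)
  (a b : K) (ha0 : a != 0) (ha1 : abs a <= 1)
  (f : K -> K) (hf : entire abs f) (hf0 : exists z, f z != 0)
  (m : nat) (hm : (0 < m)%N) (r : R) (hr : abs b / abs a < r) :
  let L := fun z : K => a * z + b in
  [/\ mu abs r (f \o L) <= mu abs r f,
      mu_quot abs r (f \o L) f <= 1 &
      mu_quot abs r (DeltaLn L m f) f <= 1].
Proof.
move=> L.
have aa : 0 < abs a.
  by rewrite lt_def abs_ge0 // andbT; apply/eqP => /(abs_eq0 habs)/eqP; rewrite (negbTE ha0).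
have r0 : 0 < r by apply: le_lt_trans hr; rewrite divr_ge0 // ?abs_ge0 // ltW.
have hbr : abs b <= r.
  move: hr; rewrite ltr_pdivrMr // => h; apply: ltW; apply: lt_le_trans h _.
  by rewrite ler_piMr // ltW.
have [c hc] := hf.
have mu0 := mu_ge0 habs hnt hc r0.
have quot : forall g, mu abs r g <= mu abs r f -> mu_quot abs r g f <= 1.
  move=> g hg; rewrite /mu_quot; have [->|nz] := eqVneq (mu abs r f) 0.
    by rewrite invr0 mulr0 ler01.
  by rewrite ler_pdivrMr ?mul1r // lt_def nz mu0.
have h1 : mu abs r (f \o L) <= mu abs r f := comp_mu habs hnt hcomp ha1 hbr r0 hc.
have h3 : forall n, exists c', coef_rep abs c' (DeltaLn L n f) /\ mu abs r (DeltaLn L n f) <= mu abs r f.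
  elim=> [|n [c' [hc' hle]]]; first by exists c; split.
  have [c'' [hc'' hle']] := delta_mu habs hnt hcomp ha1 hbr r0 hc'.
  exists c''; split => //; exact: le_trans hle' hle.
have [c3 [_ hle3]] := h3 m.
by split => //; apply: quot.
Qed.
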